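(* Let $\mathcal{X}\in\mathbb{R}^d$ be a random vector with $\mathcal{X}_j\geq\eta_{\min}>0$ and $\mathbb{E}[\mathcal{X}_j]<\infty$, let $\mathbf{X}_1,\ldots,\mathbf{X}_n$ be i.i.d. copies with entries $X_{ij}$, let $u$ be a utility function, and $h(\mathbf{w})=-\frac1n\sum_{i=1}^n u(\mathbf{w}^{\top}\mathbf{X}_i)$. For $R>0$, $\lambda>0$, let $\mathbf{w}^*$ solve $\min_{\mathbf{w}\in\mathbb{R}^d_+}\mathbb{E}[h(\mathbf{w})]$ s.t. $\|\mathbf{w}\|_1\leq R$, let $\hat{\mathbf{w}}_n$ solve $\min_{\mathbf{w}\in\mathbb{R}^d_+}h(\mathbf{w})+\lambda\|\mathbf{w}\|_1$ s.t. $\|\mathbf{w}\|_1\leq R$, and let $s=\|\mathbf{w}^*\|_0$. Assume: (a) $u$ is $L_u$-Lipschitz continuous, differentiable and concave; (c) there is $\nu>0$ with $\mathbb{E}[\exp(t(X_{ij}-\nu))]\leq\exp(t^2\sigma^2/2)$ for all $t>0,i,j$; (d) there exist $\alpha\geq2$ and $\kappa$ with (almost surely) $0<\kappa\leq\inf_{|\mathcal{S}|\leq s}\inf_{\mathbf{v}\in C(\mathcal{S},\gamma_1,\gamma_2)}\mathbf{v}^{\top}\nabla^2_{\mathbf{w}}\mathbb{E}[h(\mathbf{w}^* )]\mathbf{v}/\|\mathbf{v}\|_2^2$, where $\gamma_1=\frac{\alpha}{\alpha-1}$, $\gamma_2=\frac{\sqrt s}{\alpha-1}$. Let $\delta\in(0,1)$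 and $\lambda\geq12\alpha(\nu\vee1)L_u\sigma\sqrt{\log(3/\delta)\log(2de/s)/n}$. Let $\Delta=\hat{\mathbf{w}}_n-\mathbf{w}^*$ and let $\mathcal{S}_0\subseteq[d]$ be the set of indices of the $s$ entries of $\Delta$ of largest magnitude. Then $\Delta\in C(\mathcal{S}_0,\gamma_1,\gamma_2)$ with probability at least $1-\delta/3$.
   Context: A utility function is an increasing concave function $u:\mathbb{R}_+\to\mathbb{R}$. $C(\mathcal{S},\gamma_1,\gamma_2)=\{\mathbf{v}\in\mathbb{R}^d:\|\mathbf{v}_{\mathcal{S}^c}\|_1\leq\gamma_1\|\mathbf{v}_{\mathcal{S}}\|_1+\gamma_2\|\mathbf{v}_{\mathcal{S}}\|_2\}$, where $\mathbf{v}_{\mathcal{S}}$ is the restriction to indices in $\mathcal{S}$. $a\vee b=\max\{a,b\}$, $\|\cdot\|_0$ counts nonzero entries. *)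

(* Defs.v *)
From HB Require Import structures.
From mathcomp Require Import all_boot all_order all_algebra.
From mathcomp Require Import all_classical all_reals all_analysis.
Set Implicit Arguments. Unset Strict Implicit. Unset Printing Implicit Defensive.
Import Order.TTheory GRing.Theory Num.Theory.
Import numFieldNormedType.Exports.
Local Open Scope classical_set_scope.
Local Open Scope ring_scope.

Section vectors.
Variables (R : realType) (d : nat).
Implicit Types (v w : 'rV[R]_d) (S : {set 'I_d}).

Definition l1norm v : R := \sum_(j < d) `|v ord0 j|.
Definition l2norm v : R := Num.sqrt (\sum_(j < d) (v ord0 j) ^+ 2).
Definition l0norm v : nat := #|[set j | v ord0 j != 0]|.

Definition l1norm_on S v : R := \sum_(j in S) `|v ord0 j|.
Definition l2norm_on S v : R := Num.sqrt (\sum_(j in S) (v ord0 j) ^+ 2).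

Definition cone S (g1 g2 : R) : set 'rV[R]_d :=
  [set v | l1norm_on (~: S) v <= g1 * l1norm_on S v + g2 * l2norm_on S v].

Definition top_indices (s : nat) v S : Prop :=
  #|S| = s /\ forall j k, j \in S -> k \notin S -> `|v ord0 k| <= `|v ord0 j|.

Definition feasible (Rad : R) v : Prop :=
  (forall j, 0 <= v ord0 j) /\ l1norm v <= Rad.

Definition grad (F : 'rV[R]_d -> R) v : 'rV[R]_d :=
  \row_(j < d) ('d F v) (delta_mx ord0 j).

(* H is the Hessian of F at x: F is differentiable near x, its gradient is
   differentiable at x, and d(grad F)(x) v = v H, i.e. H j k = d_j d_k F(x). *)
Definition is_hessian (F : 'rV[R]_d -> R) (x : 'rV[R]_d) (H : 'M[R]_d) : Prop :=
  (\forall y \near x, differentiable F y) /\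
  differentiable (grad F) x /\
  forall v, ('d (grad F) x) v = v *m H.

Definition quad_form (H : 'M[R]_d) v : R := (v *m H *m v^T) ord0 ord0.

End vectors.

Section prob.
Local Open Scope ereal_scope.
Variables (dT : measure_display) (T : measurableType dT) (R : realType)
  (P : probability T R).

(* X_1..X_n (X i j = j-th entry of X_i) are i.i.d. copies of the random
   vector Xc (Xc j = its j-th entry): measurability, same joint law as Xc
   (on the generating pi-system of measurable rectangles), and mutual
   independence of the vectors X_1, ..., X_n. *)
Definition iid_copies (d n : nat) (Xc : 'I_d -> T -> R)
  (X : 'I_n -> 'I_d -> T -> R) : Prop :=
  (forall j, measurable_fun setT (Xc j)) /\
  (forall i j, measurable_fun setT (X i j)) /\
  (forall i (B : 'I_d -> set R), (forall j, measurable (B j)) ->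
     P (\bigcap_j (X i j @^-1` B j)) = P (\bigcap_j (Xc j @^-1` B j))) /\
  (forall B : 'I_n -> 'I_d -> set R, (forall i j, measurable (B i j)) ->
     P (\bigcap_i \bigcap_j (X i j @^-1` B i j)) =
     \prod_(i < n) P (\bigcap_j (X i j @^-1` B i j))).

Definition hfun (d n : nat) (u : R -> R) (X : 'I_n -> 'I_d -> T -> R)
  (w : 'rV[R]_d) : T -> R :=
  fun om => (- (n%:R^-1 * \sum_(i < n) u (\sum_(j < d) w ord0 j * X i j om)))%R.

Definition Eh (d n : nat) (u : R -> R) (X : 'I_n -> 'I_d -> T -> R)
  (w : 'rV[R]_d) : R := fine 'E_P[hfun u X w].

End prob.

(* Main.v *)
Require Import Defs.
From HB Require Import structures.
From mathcomp Require Import all_boot all_order all_algebra.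
From mathcomp Require Import all_classical all_reals all_analysis.
From mathcomp Require Import lra zify.
From mathcomp Require Import measurable_realfun.
Import Order.TTheory GRing.Theory Num.Theory.
Import numFieldNormedType.Exports.
Local Open Scope classical_set_scope.
Local Open Scope ring_scope.

Lemma top_sum (R : realType) d (f : 'I_d -> R) (A B : {set 'I_d}) :
  (forall j, 0 <= f j) -> #|A| = #|B| ->
  (forall j k, j \in A -> k \notin A -> f k <= f j) ->
  \sum_(j in B) f j <= \sum_(j in A) f j.
Proof.
move=> f0 cAB top.
rewrite (big_setID A) [X in _ <= X](big_setID B) /= (@finset.setIC _ B A).
apply: lerD => //.
have cD : #|A :\: B| = #|B :\: A|.
  have h1 := cardsID B A; have h2 := cardsID A B.
  rewrite (@finset.setIC _ B A) in h2; lia.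
have key : (\sum_(k in B :\: A) f k) *+ #|A :\: B| <=
           (\sum_(j in A :\: B) f j) *+ #|A :\: B|.
  rewrite -sumr_const.
  have -> : (\sum_(j in A :\: B) f j) *+ #|A :\: B| =
            \sum_(j in A :\: B) (f j *+ #|B :\: A|) by rewrite sumrMnl cD.
  apply: ler_sum => j jAB; rewrite -sumr_const; apply: ler_sum => k kBA.
  move: jAB kBA; rewrite !inE => /andP[_ jA] /andP[kA _].
  exact: top.
case: (posnP #|A :\: B|) => [c0|cpos].
  move: cD; rewrite c0 => /esym/eqP; rewrite cards_eq0 => /eqP ->.
  by rewrite big_set0; apply: sumr_ge0.
by rewrite ler_pMn2r in key.
Qed.

Lemma splitC {R : realType} {d} (F : 'I_d -> R) (S : {set 'I_d}) :
  \sum_j F j = \sum_(j in S) F j + \sum_(j in ~: S) F j.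
Proof.
rewrite (bigID (mem S)) /=; congr (_ + _); apply: eq_bigl => j.
by rewrite finset.in_setC.
Qed.

Lemma cone_det (R : realType) d (ws wh : 'rV[R]_d) (Rad alpha : R)
  (S0 : {set 'I_d}) :
  (forall j, 0 <= ws ord0 j) -> l1norm ws = Rad ->
  (forall j, 0 <= wh ord0 j) -> l1norm wh <= Rad -> 2 <= alpha ->
  top_indices (l0norm ws) (wh - ws) S0 ->
  cone S0 (alpha / (alpha - 1)) (Num.sqrt (l0norm ws)%:R / (alpha - 1))
       (wh - ws).
Proof.
move=> ws0 wsR wh0 whR a2 [cS0 top].
rewrite /cone /= /l1norm_on /l2norm_on.
set D : 'I_d -> R := fun j => `|(wh - ws) ord0 j|.
have D0 j : 0 <= D j by exact: normr_ge0.
set Tset := [set j | ws ord0 j != 0]%SET.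
have cT : #|S0| = #|Tset|.
  rewrite cS0 /l0norm; apply: eq_card => j.
  by rewrite /Tset finset.inE; apply/idP/idP => [/set_mem|h]; [|exact: mem_set].
have a : \sum_(j in Tset) D j <= \sum_(j in S0) D j.
  by apply: top_sum => // j k jS kS; exact: top.
have b : \sum_(j in ~: Tset) D j = \sum_(j in ~: Tset) wh ord0 j.
  apply: eq_bigr => j; rewrite !inE negbK => /eqP wj.
  by rewrite /D !mxE wj subr0 ger0_norm.
have c1 : \sum_j wh ord0 j <= \sum_j ws ord0 j.
  move: whR; rewrite -wsR /l1norm.
  by rewrite (eq_bigr _ (fun j _ => ger0_norm (wh0 j)))
             (eq_bigr (fun j => ws ord0 j) (fun j _ => ger0_norm (ws0 j))).
have c2 : \sum_(j in ~: Tset) ws ord0 j = 0.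
  by apply: big1 => j; rewrite !inE negbK => /eqP.
have c3 : \sum_(j in Tset) (ws ord0 j - wh ord0 j) <= \sum_(j in Tset) D j.
  apply: ler_sum => j _; rewrite /D !mxE distrC; exact: ler_norm.
rewrite sumrB in c3.
have e1 := splitC D S0. have e2 := splitC D Tset.
have e3 := splitC (fun j => wh ord0 j) Tset.
have e4 := splitC (fun j => ws ord0 j) Tset.
have key : \sum_(j in ~: S0) D j <= \sum_(j in S0) D j by lra.
have g1 : 1 <= alpha / (alpha - 1).
  by rewrite ler_pdivlMr ?mul1r; lra.
have g2 : 0 <= Num.sqrt (l0norm ws)%:R / (alpha - 1).
  by apply: divr_ge0 => //; lra.
have s0 : 0 <= \sum_(j in S0) D j by apply: sumr_ge0.
have l0 : 0 <= Num.sqrt (\sum_(j in S0) ((wh - ws) ord0 j) ^+ 2) by [].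
have : 0 <= Num.sqrt (l0norm ws)%:R / (alpha - 1) *
        Num.sqrt (\sum_(j in S0) ((wh - ws) ord0 j) ^+ 2) by apply: mulr_ge0.
have : \sum_(j in S0) D j <= alpha / (alpha - 1) * \sum_(j in S0) D j.
  by rewrite ler_peMl.
rewrite /D; lra.
Qed.

Section meas.
Context (dT : measure_display) (T : measurableType dT) (R : realType)
  (P : probability T R) (d n : nat)
  (Xc : 'I_d -> T -> R) (X : 'I_n -> 'I_d -> T -> R).
Hypothesis hiid : iid_copies P Xc X.

Lemma law i j (B : set R) : measurable B ->
  P (X i j @^-1` B) = P (Xc j @^-1` B).
Proof.
move=> mB; have [_ [_ [h _]]] := hiid.
have := h i (fun k => if k == j then B else setT).
have E (Y : 'I_d -> T -> R) :
  \bigcap_k (Y k @^-1` (if k == j then B else setT)) = Y j @^-1` B.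
  apply/seteqP; split => om /=.
    by move=> H; have := H j I; rewrite /= eqxx.
  by move=> HB k _ /=; case: eqP => [->|].
rewrite !E; apply => k; case: eqP => // _; exact: measurableT.
Qed.

Lemma intX i j (eta : R) : (forall om, eta <= Xc j om) -> 0 <= eta ->
  ('E_P[Xc j] < +oo)%E -> P.-integrable setT (EFin \o X i j).
Proof.
move=> lb eta0 fin; have [mXc [mX _]] := hiid.
apply/integrableP; split; first exact/measurable_realfun.measurable_EFinP.
have m1 : measurable_fun setT (fun y : R => (`|y%:E|)%E : \bar R).
  apply: measurableT_comp => //; exact: measurable_realfun.EFin_measurable.
rewrite /=.
have -> : (\int[P]_x `|(X i j x)%:E|)%E =
          (\int[pushforward P (X i j)]_(y in setT) `|y%:E|)%E.
  by rewrite ge0_integral_pushforward // preimage_setT.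
rewrite (eq_measure_integral (pushforward P (Xc j))); last first.
  by move=> A mA _; exact: (law i j A mA).
rewrite ge0_integral_pushforward // preimage_setT.
move: fin; rewrite unlock; apply: le_lt_trans.
apply: ge0_le_integral => //.
all: try (move=> x _ /=).
- by rewrite lee_fin.
- exact: measurableT_comp.
- exact/measurable_realfun.measurable_EFinP.
- by rewrite ger0_norm // (le_trans eta0 (lb x)).
Qed.



Section ints.
Local Notation "'Int' f" := (P.-integrable setT (EFin \o f)) (at level 10).

Lemma int_sumR (I : finType) (h : I -> T -> R) :
  (forall i, Int (h i)) -> Int (fun x => \sum_i h i x).
Proof.
move=> hi; apply: (eq_integrable measurableT (fun x => \sum_i (h i x)%:E)) => //.
  by move=> x _ /=; rewrite sumEFin.
apply: integrable_sum => [|i _]; [exact: measurableT|exact: hi].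
Qed.

Lemma int_scale (k : R) (h : T -> R) : Int h -> Int (fun x => k * h x).
Proof.
move=> hi; apply: (eq_integrable measurableT (fun x => k%:E * (h x)%:E)%E) => //.
by apply: integrableZl.
Qed.

Lemma int_add (f g : T -> R) : Int f -> Int g -> Int (fun x => f x + g x).
Proof.
move=> fi gi; apply: (eq_integrable measurableT (fun x => (f x)%:E + (g x)%:E)%E) => //.
exact: integrableD.
Qed.

Lemma int_cst (k : R) : Int (fun _ => k).
Proof. exact: finite_measure_integrable_cst. Qed.

Lemma int_abs (f : T -> R) : Int f -> Int (fun x => `|f x|).
Proof.
move=> fi; apply: (eq_integrable measurableT (abse \o (EFin \o f))) => //.
exact: integrable_abse.
Qed.
End ints.

Variable eta : R.
Hypothesis hn : (0 < n)%N.
Hypothesis heta : 0 < eta.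
Hypothesis hXlb : forall j om, eta <= Xc j om.
Hypothesis hXint : forall j, ('E_P[Xc j] < +oo)%E.
Variables (u : R -> R) (Lu : R).
Hypothesis hu_lip : forall x y, `|u x - u y| <= Lu * `|x - y|.
Hypothesis ucont : continuous u.

Lemma hfun_meas w : measurable_fun setT (hfun u X w).
Proof.
have [_ [mX _]] := hiid.
rewrite /hfun; apply: measurableT_comp => //.
apply: measurableT_comp => //.
apply: measurable_sum => i; apply: measurableT_comp.
  exact: continuous_measurable_fun.
apply: measurable_sum => j; apply: measurableT_comp => //.
Qed.

Lemma hfun_int w : P.-integrable setT (EFin \o hfun u X w).
Proof.
have Lu0 : 0 <= Lu.
  have := hu_lip 1 0; rewrite subr0 normr1 mulr1; apply: le_trans.
  exact: normr_ge0.
pose B om := \sum_(i < n) (`|u 0| + Lu * \sum_(j < d) `|w ord0 j| * `|X i j om|).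
have iB : P.-integrable setT (EFin \o B).
  apply: int_sumR => i; apply: int_add; first exact: int_cst.
  apply: int_scale; apply: int_sumR => j; apply: int_scale.
  apply: int_abs; apply: (@intX _ _ eta) => //; exact: ltW.
apply: (le_integrable measurableT _ _ iB).
  exact/measurable_realfun.measurable_EFinP/hfun_meas.
move=> om _ /=; rewrite lee_fin.
apply: (le_trans _ (ler_norm _)).
rewrite /hfun normrN normrM.
have n1 : `|n%:R^-1 : R| <= 1.
  rewrite ger0_norm ?invr_ge0 // invf_le1 // ?ler1n ?ltr0n //.
apply: (le_trans (ler_piMl _ n1)) => //.
apply: (le_trans (ler_norm_sum _ _ _)); apply: ler_sum => i _.
have h1 := hu_lip (\sum_j w ord0 j * X i j om) 0.
rewrite subr0 in h1.
have h2 : `|\sum_j w ord0 j * X i j om| <= \sum_j `|w ord0 j| * `|X i j om|.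
  by apply: (le_trans (ler_norm_sum _ _ _)); apply: ler_sum => j _; rewrite normrM.
set S := \sum_j w ord0 j * X i j om in h1 h2 *.
have h3 : `|u S| <= `|u S - u 0| + `|u 0|.
  by rewrite -{1}(subrK (u 0) (u S)) ler_normD.
have h4 := ler_wpM2l Lu0 h2.
lra.
Qed.

Hypothesis hu_incr : forall x y, x < y -> u x < u y.
Variable Rad : R.

Lemma null_fin (j0 : 'I_d) (s : seq 'I_n) :
  P.-negligible [set om | exists2 i, i \in s & X i j0 om <= 0].
Proof.
have [_ [mX _]] := hiid.
have Z i : P (X i j0 @^-1` `]-oo, 0]) = 0%E.
  rewrite law //; rewrite (_ : _ @^-1` _ = set0) ?measure0 //.
  apply/seteqP; split => om //=; rewrite in_itv /= => h.
  move: h; have := hXlb j0 om; have := heta; lra.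
elim: s => [|a s ih].
  apply: (negligibleS _ (negligible_set0 P)).
  by move=> om /= [i]; rewrite in_nil.
apply: (negligibleS (A := X a j0 @^-1` `]-oo, 0] `|` [set om | exists2 i, i \in s & X i j0 om <= 0])).
  move=> om /= [i]; rewrite in_cons => /orP[/eqP ->|iS] h.
    by left; rewrite /= in_itv /=.
  by right; exists i.
apply: negligibleU => //; apply/negligibleP => //.
rewrite -[X in measurable X]setTI; apply: (mX a j0) => //.
exact: Z.
Qed.

Lemma inner (ws : 'rV[R]_d) (j0 : 'I_d) (e : R) (x : 'I_d -> R) :
  \sum_j (\row_j (ws ord0 j + (if j == j0 then e else 0))) ord0 j * x j =
  \sum_j ws ord0 j * x j + e * x j0.
Proof.
rewrite (eq_bigr (fun j => ws ord0 j * x j + (if j == j0 then e else 0) * x j)); last first.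
  by move=> j _; rewrite mxE mulrDl.
rewrite big_split /=; congr (_ + _).
rewrite (bigD1 j0) //= eqxx big1 ?addr0 // => j /negbTE ->; exact: mul0r.
Qed.

Lemma l1_full (wstar : 'rV[R]_d) : (0 < d)%N -> feasible Rad wstar ->
  (forall w, feasible Rad w -> Eh P u X wstar <= Eh P u X w) ->
  l1norm wstar = Rad.
Proof.
move=> d0 [ws0 wsR] wsmin.
apply/eqP; rewrite eq_le wsR /= leNgt; apply/negP => lt.
set e := Rad - l1norm wstar.
have e0 : 0 < e by rewrite subr_gt0.
pose j0 : 'I_d := Ordinal d0.
pose w' := \row_j (wstar ord0 j + (if j == j0 then e else 0)).
have w'0 j : 0 <= w' ord0 j.
  by rewrite mxE; apply: addr_ge0 => //; case: ifP => // _; exact: ltW.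
have l1s : l1norm wstar = \sum_j wstar ord0 j.
  by apply: eq_bigr => j _; rewrite ger0_norm.
have l1w' : l1norm w' = Rad.
  rewrite /l1norm (eq_bigr (fun j => w' ord0 j)) => [|j _]; last by rewrite ger0_norm.
  rewrite /w' (eq_bigr (fun j => wstar ord0 j + (if j == j0 then e else 0)));
    last by move=> j _; rewrite mxE.
  rewrite big_split /= -big_mkcond /= big_pred1_eq -l1s /e.
  by rewrite addrC subrK.
have fw' : feasible Rad w' by split => //; rewrite l1w'.
have hle := wsmin w' fw'.
have [N [mN PN0 NN]] := null_fin j0 (enum 'I_n).
set f0 := hfun u X wstar; set f1 := hfun u X w'.
have pos om : ~ N om -> 0 < f0 om - f1 om.
  move=> Nom.
  have Xp i : 0 < X i j0 om.
    rewrite ltNge; apply/negP => h; apply: Nom; apply: NN.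
    by exists i => //; rewrite mem_enum.
  rewrite /f0 /f1 /hfun.
  have -> : \sum_(i < n) u (\sum_j w' ord0 j * X i j om) =
            \sum_(i < n) u (\sum_j wstar ord0 j * X i j om + e * X i j0 om).
    by apply: eq_bigr => i _; rewrite /w' inner.
  rewrite opprK addrC -mulrBr -sumrB; apply: mulr_gt0.
    by rewrite invr_gt0 ltr0n.
  have t i : 0 < u (\sum_j wstar ord0 j * X i j om + e * X i j0 om) -
                 u (\sum_j wstar ord0 j * X i j om).
    by rewrite subr_gt0; apply: hu_incr; rewrite ltrDl mulr_gt0.
  rewrite (bigD1 (Ordinal hn)) //=; apply: (lt_le_trans (t (Ordinal hn))).
  by rewrite lerDl; apply: sumr_ge0 => i _; exact: ltW.
have i0 := hfun_int wstar; have i1 := hfun_int w'.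
have iB := integrableB measurableT i0 i1.
have fin0 := integrable_fin_num measurableT i0.
have fin1 := integrable_fin_num measurableT i1.
have mG : measurable_fun setT (fun x => (f0 x)%:E - (f1 x)%:E)%E.
  by case/integrableP: iB.
have key : (0 < \int[P]_x ((f0 x)%:E - (f1 x)%:E))%E.
  rewrite (@negligible_integral _ _ _ P setT N _ mN measurableT iB PN0).
  set D := setT `\` N.
  have mD : measurable D by apply: measurableD.
  have G0 x : D x -> (0 <= (f0 x)%:E - (f1 x)%:E)%E.
    by move=> [_ Nx]; rewrite -EFinB lee_fin; apply/ltW/pos.
  rewrite lt0e integral_ge0 // andbT; apply/negP => /eqP I0.
  have : (\int[P]_(x in D) `|(f0 x)%:E - (f1 x)%:E|)%E = 0%E.
    by rewrite -I0; apply: eq_integral => x /set_mem Dx; rewrite gee0_abs // G0.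
  move/ae_eq_integral_abs => /(_ mD (measurable_funS measurableT (subsetT D) mG)).
  move=> [M [mM PM0 sub]].
  have : (P setT <= P (N `|` M))%E.
    apply: le_measure; rewrite ?inE //; first exact: measurableU.
    move=> x _; have [Nx|Nx] := pselect (N x); first by left.
    right; apply: sub => /= h.
    have : D x by split.
    move/h => /eqP; rewrite -EFinB eqe => /eqP.
    have := pos x Nx; lra.
  move=> le1.
  have : (P setT <= P N + P M)%E := le_trans le1 (measureU2 P mN mM).
  by rewrite PN0 PM0 adde0 probability_setT lee_fin ler10.
move: hle; rewrite /Eh unlock.
move: key; rewrite integralB_EFin //.
rewrite -(fineK fin0) -(fineK fin1) -EFinB lte_fin /= => ? ?; lra.
Qed.

End meas.

Theorem theorem6 (dT : measure_display) (T : measurableType dT) (R : realType)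
  (P : probability T R) (d n : nat)
  (Xc : 'I_d -> T -> R) (X : 'I_n -> 'I_d -> T -> R)
  (eta_min : R) (u : R -> R) (Lu Rad lam nu sigma alpha kappa delta : R)
  (wstar : 'rV[R]_d) (what : T -> 'rV[R]_d) (H : 'M[R]_d)
  (hn : (0 < n)%N)
  (* the random vector Xc: entries bounded below by eta_min > 0, finite means *)
  (heta : 0 < eta_min)
  (hXlb : forall j om, eta_min <= Xc j om)
  (hXint : forall j, ('E_P[Xc j] < +oo)%E)
  (* X_1, ..., X_n are i.i.d. copies of Xc *)
  (hiid : iid_copies P Xc X)
  (* u is a utility function: increasing and concave *)
  (hu_incr : forall x y, x < y -> u x < u y)
  (hu_conc : forall x y t, 0 <= t <= 1 ->
               (1 - t) * u x + t * u y <= u ((1 - t) * x + t * y))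
  (* (a) u is Lu-Lipschitz and differentiable *)
  (hu_lip : forall x y, `|u x - u y| <= Lu * `|x - y|)
  (hu_diff : forall x : R, derivable u x 1)
  (hRad : 0 < Rad) (hlam : 0 < lam)
  (* w* solves min E[h(w)] over w >= 0, ||w||_1 <= Rad *)
  (hwstar : feasible Rad wstar /\
            forall w, feasible Rad w -> Eh P u X wstar <= Eh P u X w)
  (* hat w_n solves min h(w) + lam ||w||_1 over w >= 0, ||w||_1 <= Rad *)
  (hwhat : forall om, feasible Rad (what om) /\
            forall w, feasible Rad w ->
              hfun u X (what om) om + lam * l1norm (what om)
              <= hfun u X w om + lam * l1norm w)
  (* s = ||w*||_0 (>= 1, needed for log(2de/s) to make sense) *)
  (hs : (0 < l0norm wstar)%N)
  (* (c) *)
  (hnu : 0 < nu) (hsigma : 0 < sigma)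
  (hmgf : forall (t : R) i j, 0 < t ->
     ('E_P[fun om => expR (t * (X i j om - nu))]
        <= (expR (t ^+ 2 * sigma ^+ 2 / 2))%:E)%E)
  (* (d) H is the Hessian of E[h] at w*, restricted eigenvalue condition *)
  (halpha : 2 <= alpha)
  (hH : is_hessian (Eh P u X) wstar H)
  (hkappa : 0 < kappa /\
     forall S : {set 'I_d}, (#|S| <= l0norm wstar)%N ->
     forall v : 'rV[R]_d,
       cone S (alpha / (alpha - 1))
              (Num.sqrt (l0norm wstar)%:R / (alpha - 1)) v ->
       v != 0 ->
       kappa <= quad_form H v / l2norm v ^+ 2)
  (hdelta : 0 < delta < 1)
  (hlam_lb : 12 * alpha * Num.max nu 1 * Lu * sigma *
      Num.sqrt (ln (3 / delta) * ln (2 * d%:R * expR 1 / (l0norm wstar)%:R)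
                / n%:R) <= lam) :
  exists A : set T, measurable A /\ ((1 - delta / 3)%:E <= P A)%E /\
    forall om, A om ->
    forall S0 : {set 'I_d}, top_indices (l0norm wstar) (what om - wstar) S0 ->
      cone S0 (alpha / (alpha - 1))
              (Num.sqrt (l0norm wstar)%:R / (alpha - 1)) (what om - wstar).
Proof.
have [[ws0 wsR] wsmin] := hwstar.
have ucont : continuous u.
  by move=> x; apply: differentiable_continuous; exact/derivable1_diffP.
have d0 : (0 < d)%N.
  move: hs; rewrite /l0norm => /card_gt0P [j _].
  exact: (leq_ltn_trans (leq0n j) (ltn_ord j)).
have l1eq : l1norm wstar = Rad.
  by apply: (@l1_full dT T R P d n Xc X hiid eta_min hn heta hXlb hXint u Lu
    hu_lip ucont hu_incr Rad).
exists setT; split => //; split.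
  by rewrite probability_setT lee_fin; lra.
move=> om _ S0 hS0; have [[wh0 whR] _] := hwhat om.
by apply: (@cone_det _ _ wstar (what om) Rad).
Qed.
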